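(* Let $\mathbb{F}$ be a finite field with $n=|\mathbb{F}|$, let $d<n$ and $\delta=1-d/n\ge 3/4$, and let $0<\rho\le\delta/8$. Let $f\colon\mathbb{F}^m\to\mathbb{F}$ and let $a,h,h'\in\mathbb{F}^m$ be such that the function $g\colon\mathbb{F}^2\to\mathbb{F}$, $g(t,s)=f(a+th+sh')$, has at least $(\delta-2\rho)n^2$ nonzero values. Choose $s,s',t,t'\in\mathbb{F}$ independently and uniformly and let $y=a+sh+s'h'$ and $u=th+t'h'$. Then \[ \Pr\big[\,|\{r\in\mathbb{F}: f(y+ru)\ne0\}|\ge 2\rho n\,\big]\ge 1-\frac{4}{n}. \] *)

(* Defs.v *)
From HB Require Import structures.
From mathcomp Require Export all_boot all_order all_algebra.
Set Implicit Arguments. Unset Strict Implicit. Unset Printing Implicit Defensive.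
Import Order.TTheory GRing.Theory Num.Theory.
Local Open Scope ring_scope.

Definition line_nonzeros (F : finFieldType) (m : nat) (f : 'rV[F]_m -> F)
  (y u : 'rV[F]_m) : nat := #|[set r : F | f (y + r *: u) != 0]|.

Definition plane_nonzeros (F : finFieldType) (m : nat) (f : 'rV[F]_m -> F)
  (a h h' : 'rV[F]_m) : nat :=
  #|[set ts : F * F | f (a + ts.1 *: h + ts.2 *: h') != 0]|.

Definition good_lines (R : realFieldType) (F : finFieldType) (m : nat)
  (f : 'rV[F]_m -> F) (a h h' : 'rV[F]_m) (rho : R) : {set F * F * F * F} :=
  [set x : F * F * F * F |
    let: (s, s', t, t') := x in
    2 * rho * (#|F|)%:R <=
      (line_nonzeros f (a + s *: h + s' *: h') (t *: h + t' *: h'))%:R].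

(* Main.v *)
Require Import Defs.
From mathcomp Require Import all_boot all_order all_algebra.
From mathcomp Require Import ring lra.
Import Order.TTheory GRing.Theory Num.Theory.
Set Implicit Arguments. Unset Strict Implicit. Unset Printing Implicit Defensive.
Local Open Scope ring_scope.

Lemma sum_pair (R : comPzRingType) (I J : finType) (phi : I * J -> R) :
  \sum_x phi x = \sum_i \sum_j phi (i, j).
Proof. by rewrite pair_big /=; apply: eq_bigr => -[i j]. Qed.

Lemma sum_indic (R : comPzRingType) (T : finType) (A : {set T}) :
  \sum_x ((x \in A)%:R : R) = #|A|%:R.
Proof.
rewrite -sum1_card natr_sum [RHS]big_mkcond; apply: eq_bigr => x _.
by case: (x \in A).
Qed.

Lemma sum_cst (R : comPzRingType) (T : finType) (c : R) :
  \sum_(x : T) c = #|T|%:R * c.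
Proof. by rewrite big_const -Monoid.iteropE -/(c *+ _) cardE mulr_natl. Qed.

Definition pt (F : finFieldType) (x : F * F * F * F) (r : F) : F * F :=
  (x.1.1.1 + r * x.1.2, x.1.1.2 + r * x.2).

Definition Xr (R : comPzRingType) (F : finFieldType) (S : {set F * F})
  (x : F * F * F * F) : R := \sum_r ((pt x r \in S)%:R).

Lemma sum_shift (R : comPzRingType) (F : finFieldType) (phi : F * F -> R) c1 c2 :
  \sum_p phi (p.1 + c1, p.2 + c2) = \sum_p phi p.
Proof.
symmetry; apply: (reindex_inj (h := fun p : F * F => (p.1 + c1, p.2 + c2))).
by move=> [p1 p2] [q1 q2] /= [/addIr-> /addIr->].
Qed.

Lemma sum4 (R : comPzRingType) (F : finFieldType) (phi : F * F * F * F -> R) :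
  \sum_x phi x = \sum_u \sum_t \sum_t' phi (u, t, t').
Proof.
rewrite (sum_pair phi) (sum_pair (fun y => \sum_t' phi (y, t'))).
by apply: eq_bigr => -[u1 u2] _.
Qed.

Lemma sum_X (R : comPzRingType) (F : finFieldType) (S : {set F * F}) :
  \sum_x (Xr R S x) = (#|F|%:R) ^+ 3 * #|S|%:R.
Proof.
rewrite /Xr exchange_big /=.
transitivity (\sum_(r : F) ((#|F|%:R) ^+ 2 * (#|S|%:R : R))); last first.
  by rewrite sum_cst exprS mulrA.
apply: eq_bigr => r _; rewrite sum4 exchange_big /=.
rewrite expr2 -mulrA -sum_cst; apply: eq_bigr => t _.
rewrite exchange_big /= -sum_cst; apply: eq_bigr => t' _.
rewrite /pt /=.
by rewrite (sum_shift (fun p => ((p \in S)%:R : R))) sum_indic.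
Qed.

Lemma lin_inj (F : finFieldType) (r1 r2 s t s2 t2 : F) : r1 != r2 ->
  s + r1 * t = s2 + r1 * t2 -> s + r2 * t = s2 + r2 * t2 -> s = s2 /\ t = t2.
Proof.
move=> ne e1 e2.
have ht : t = t2.
  have h : (r1 - r2) * t = (r1 - r2) * t2.
    transitivity ((s + r1 * t) - (s + r2 * t)); first by ring.
    rewrite e1 e2; ring.
  by apply: (mulfI _ h); rewrite subr_eq0.
by split=> //; move: e1; rewrite ht => /addIr.
Qed.

Lemma sum_pair2 (R : comPzRingType) (F : finFieldType) (S : {set F * F}) r1 r2 :
  r1 != r2 ->
  \sum_x (((pt x r1 \in S)%:R : R) * (pt x r2 \in S)%:R) = (#|S|%:R) ^+ 2.
Proof.
move=> ne.
pose g (x : F * F * F * F) := ((pt x r1).1, (pt x r1).2, (pt x r2).1, (pt x r2).2).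
pose psi (y : F * F * F * F) : R :=
  ((y.1.1.1, y.1.1.2) \in S)%:R * ((y.1.2, y.2) \in S)%:R.
have ginj : injective g.
  move=> [[[s s'] t] t'] [[[s2 s2'] t2] t2']; rewrite /g /pt /=.
  case=> e1 e1' e2 e2'.
  have [-> ->] := lin_inj ne e1 e2.
  by have [-> ->] := lin_inj ne e1' e2'.
transitivity (\sum_x psi (g x)); first by apply: eq_bigr => -[[[s s'] t] t'].
rewrite -(reindex_inj (P := xpredT) (F := psi) ginj) sum4 expr2.
rewrite -{1}(sum_indic R S) mulr_suml.
apply: eq_bigr => u _; rewrite -(sum_indic R S) mulr_sumr sum_pair.
by apply: eq_bigr => c _; apply: eq_bigr => d _; case: u.
Qed.

Lemma sum_ind1 (R : comPzRingType) (F : finFieldType) (S : {set F * F}) r :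
  \sum_x ((pt x r \in S)%:R : R) = (#|F|%:R) ^+ 2 * #|S|%:R.
Proof.
rewrite sum4 exchange_big /=.
rewrite expr2 -mulrA -sum_cst; apply: eq_bigr => t _.
rewrite exchange_big /= -sum_cst; apply: eq_bigr => t' _.
rewrite /pt /=.
by rewrite (sum_shift (fun p => ((p \in S)%:R : R))) sum_indic.
Qed.

Lemma sum_X2 (R : comPzRingType) (F : finFieldType) (S : {set F * F}) :
  \sum_x (Xr R S x) ^+ 2 =
  (#|F|%:R) * ((#|F|%:R) ^+ 2 * #|S|%:R + (#|F|%:R - 1) * (#|S|%:R) ^+ 2).
Proof.
have sq x : (Xr R S x) ^+ 2 = \sum_r1 \sum_r2
    (((pt x r1 \in S)%:R : R) * (pt x r2 \in S)%:R).
  by rewrite /Xr expr2 mulr_suml; apply: eq_bigr => r1 _; rewrite mulr_sumr.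
rewrite (eq_bigr _ (fun x _ => sq x)) exchange_big /= -sum_cst.
apply: eq_bigr => r1 _; rewrite exchange_big /= (bigD1 r1) //=.
have e1 : \sum_x (((pt x r1 \in S)%:R : R) * (pt x r1 \in S)%:R) =
    (#|F|%:R) ^+ 2 * #|S|%:R.
  rewrite -(sum_ind1 R S r1); apply: eq_bigr => x _.
  by case: (_ \in _); rewrite ?mulr1 ?mulr0.
rewrite e1.
rewrite (eq_bigr (fun _ => (#|S|%:R) ^+ 2)); last first.
  by move=> r2 ne; rewrite sum_pair2 // eq_sym.
have hc : \sum_(i : F) ((#|S|%:R : R)) ^+ 2 = (#|S|%:R) ^+ 2 +
   \sum_(i : F | true && (i != r1)) (#|S|%:R : R) ^+ 2 by rewrite (bigD1 r1).
rewrite sum_cst in hc.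
set T := (X in _ + X = _).
have -> : T = #|F|%:R * (#|S|%:R) ^+ 2 - (#|S|%:R) ^+ 2.
  by rewrite hc addrC addKr.
ring.
Qed.

Lemma vec_id (F : finFieldType) (m : nat) (a h h' : 'rV[F]_m) (s s' t t' r : F) :
  a + s *: h + s' *: h' + r *: (t *: h + t' *: h') =
  a + (s + r * t) *: h + (s' + r * t') *: h'.
Proof.
rewrite scalerDr !scalerA !scalerDl !addrA; congr (_ + _); by rewrite addrAC.
Qed.

Theorem mainTheorem5 (R : realFieldType) (F : finFieldType) (m d : nat)
  (delta rho : R) (f : 'rV[F]_m -> F) (a h h' : 'rV[F]_m) :
  (d < #|F|)%N ->
  delta = 1 - d%:R / (#|F|)%:R ->
  3 / 4 <= delta ->
  0 < rho -> rho <= delta / 8 ->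
  (delta - 2 * rho) * (#|F|)%:R ^+ 2 <= (plane_nonzeros f a h h')%:R :> R ->
  1 - 4 / (#|F|)%:R <= (#|good_lines f a h h' rho|)%:R / (#|F|)%:R ^+ 4 :> R.
Proof.
move=> hd _ hdel hrho hrd hpl.
set S := [set ts : F * F | f (a + ts.1 *: h + ts.2 *: h') != 0].
have hKS : plane_nonzeros f a h h' = #|S| by [].
rewrite hKS in hpl.
set N : R := #|F|%:R.
set K : R := #|S|%:R.
have hN : 0 < N by rewrite ltr0n; apply: leq_ltn_trans hd.
have hK0 : 0 <= K by rewrite ler0n.
have hKN : K <= N ^+ 2.
  rewrite /K /N expr2 -natrM ler_nat -card_prod; exact: max_card.
have hline : forall x : F * F * F * F,
    (line_nonzeros f (a + x.1.1.1 *: h + x.1.1.2 *: h')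
       (x.1.2 *: h + x.2 *: h'))%:R = Xr R S x.
  move=> x; rewrite /line_nonzeros -sum_indic /Xr; apply: eq_bigr => r _.
  by rewrite !inE vec_id.
set G := good_lines f a h h' rho.
set B := ~: G.
have hcard : (#|G| + #|B|)%N = (#|F| ^ 4)%N.
  by rewrite cardsC !card_prod !expnS expn0 muln1 !mulnA.
have hinB : forall x, x \in B -> 3 / 8 * N ^+ 2 <= K - N * Xr R S x.
  move=> [[[s s'] t] t']; rewrite !inE /= => hx.
  rewrite -ltNge (hline (s, s', t, t')) -/N in hx.
  move: (Xr R S (s, s', t, t')) hx => X hx.
  have : N * X <= N * (2 * rho * N) by rewrite ler_pM2l // ltW.
  have : 0 <= N ^+ 2 by rewrite sqr_ge0.
  rewrite -/N -/K in hpl.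
  rewrite expr2 in hpl *.
  nra.
have hsum : \sum_x (N * Xr R S x - K) ^+ 2 = N ^+ 3 * K * (N ^+ 2 - K).
  have e : forall x, (N * Xr R S x - K) ^+ 2 =
     N ^+ 2 * Xr R S x ^+ 2 + ((- (2 * N * K)) * Xr R S x + K ^+ 2).
    by move=> x; ring.
  rewrite (eq_bigr _ (fun x _ => e x)) !big_split /= -!mulr_sumr sum_cst.
  rewrite sum_X sum_X2 !card_prod !natrM -/N -/K; ring.
have hB : #|B|%:R * (9 / 64 * N ^+ 4) <= N ^+ 3 * K * (N ^+ 2 - K).
  rewrite -hsum mulr_natl -sumr_const.
  apply: (le_trans (y := \sum_(x in B) (N * Xr R S x - K) ^+ 2)).
    apply: ler_sum => x xB.
    have := hinB x xB.
    have : 0 <= N ^+ 2 by rewrite sqr_ge0.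
    move: (Xr R S x) => X h1 h2.
    have -> : N ^+ 4 = N ^+ 2 * N ^+ 2 by rewrite -exprD.
    nra.
  rewrite [X in _ <= X](bigID (fun x => x \in B)) /= lerDl.
  by apply: sumr_ge0 => x _; rewrite sqr_ge0.
have hB2 : #|B|%:R * (9 / 64) * N ^+ 4 <= (N ^+ 3 / 4) * N ^+ 4.
  apply: (le_trans (y := N ^+ 3 * K * (N ^+ 2 - K))); first by rewrite -mulrA.
  have h3 : 0 <= N ^+ 3 by rewrite exprn_ge0 // ltW.
  have h4 : K * (N ^+ 2 - K) <= N ^+ 4 / 4.
    have -> : N ^+ 4 = N ^+ 2 * N ^+ 2 by rewrite -exprD.
    have := sqr_ge0 (N ^+ 2 - 2 * K); nra.
  have -> : N ^+ 3 * K * (N ^+ 2 - K) = N ^+ 3 * (K * (N ^+ 2 - K)) by ring.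
  have -> : N ^+ 3 / 4 * N ^+ 4 = N ^+ 3 * (N ^+ 4 / 4) by ring.
  have hN3 : 0 < N ^+ 3 by rewrite exprn_gt0.
  by rewrite ler_pM2l.
have hN4 : 0 < N ^+ 4 by rewrite exprn_gt0.
rewrite ler_pM2r // in hB2.
have hG : #|G|%:R = N ^+ 4 - #|B|%:R :> R.
  by rewrite -natrX -hcard natrD addrK.
rewrite -/N ler_pdivlMr // hG.
have -> : (1 - 4 / N) * N ^+ 4 = N ^+ 4 - 4 * N ^+ 3.
  by field; rewrite gt_eqF.
have h3 : 0 <= N ^+ 3 by rewrite exprn_ge0 // ltW.
lra.
Qed.
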